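(* For every real $x>1/4$, $$\sum_{k=0}^\infty\frac1{x^{2k}\binom{4k}{2k}}=\frac{16x^2}{16x^2-1}+2x\left(\frac{\operatorname{arccot}\sqrt{4x-1}}{(4x-1)\sqrt{4x-1}}-\frac{\operatorname{arccoth}\sqrt{4x+1}}{(4x+1)\sqrt{4x+1}}\right).$$
   Context: For $y>0$, $\operatorname{arccot}y=\arctan(1/y)$; for $y>1$, $\operatorname{arccoth}y=\operatorname{arctanh}(1/y)=\frac12\log\frac{y+1}{y-1}$. *)

(* Defs.v *)
From Stdlib Require Import Reals.
From Coquelicot Require Export Coquelicot.
Open Scope R_scope.

Definition arccot (y : R) : R := atan (/ y).

(* arccoth y = arctanh (1/y) = (1/2) log ((y+1)/(y-1)), used for y > 1 *)
Definition arccoth (y : R) : R := / 2 * ln ((y + 1) / (y - 1)).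

(* Main.v *)
Require Import Defs.
From Stdlib Require Import Reals Lra Lia Factorial.
From Coquelicot Require Import Coquelicot.
Open Scope R_scope.

Definition Kval (m : nat) : R := 2 * 4 ^ m * (INR (fact m)) ^ 2 / INR (fact (2 * m + 1)).

Lemma Kval_S m : Kval (S m) = 2 * INR (S m) / (2 * INR m + 3) * Kval m.
Proof.
  unfold Kval.
  replace (2 * S m + 1)%nat with (S (S (2 * m + 1))) by lia.
  rewrite !fact_simpl, !mult_INR.
  assert (H1 := INR_fact_neq_0 m). assert (H2 := INR_fact_neq_0 (2*m+1)).
  assert (0 <= INR m) by apply pos_INR.
  rewrite !S_INR, plus_INR, mult_INR. simpl (INR 2). simpl (INR 1).
  change (4 ^ S m) with (4 * 4 ^ m). field. repeat split; lra.
Qed.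

Lemma Kint m : is_RInt (fun s => (1 - s ^ 2) ^ m) (-1) 1 (Kval m).
Proof.
  induction m as [|m IH].
  - replace (Kval 0) with (scal (1 - -1) (1:R)).
    + apply is_RInt_ext with (fun _ => 1). intros; simpl; ring. exact (@is_RInt_const R_NormedModule (-1) 1 1).
    + unfold Kval, scal; simpl; unfold mult; simpl. field.
  - set (D := fun s => (2 * INR m + 3) * (1 - s^2)^(S m) - 2 * INR (S m) * (1 - s^2)^m).
    assert (HD : is_RInt D (-1) 1 (minus ((fun s => s * (1 - s^2)^(S m)) 1) ((fun s => s * (1 - s^2)^(S m)) (-1)))).
    { apply (is_RInt_derive (fun s => s * (1 - s^2)^(S m)) D).
      - intros s _. unfold D. auto_derive. auto. rewrite !S_INR. cbn [pow]. assert (E : forall k, match k with 0%nat => 1 | S _ => INR k + 1 end = INR k + 1) by (intros []; simpl; ring). rewrite E. unfold Rminus. set (p := pow _ m). ring.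
      - intros s _. apply (@ex_derive_continuous R_AbsRing R_NormedModule D). unfold D. auto_derive. auto. }
    replace (minus _ _) with 0 in HD by (simpl; unfold minus, plus, opp; simpl; ring).
    assert (H2 := is_RInt_plus _ _ _ _ _ _ HD (is_RInt_scal _ _ _ (2 * INR (S m)) _ IH)).
    assert (H3 := is_RInt_scal _ _ _ (/ (2 * INR m + 3)) _ H2).
    rewrite Kval_S.
    assert (0 <= INR m) by apply pos_INR.
    eapply is_RInt_ext; [| replace (2 * INR (S m) / (2 * INR m + 3) * Kval m) with
      (scal (/ (2 * INR m + 3)) (plus 0 (scal (2 * INR (S m)) (Kval m)))); [exact H3|] ].
    + intros s _. unfold D, scal, plus; simpl; unfold mult, plus; simpl. field. lra.
    + unfold scal, plus; simpl; unfold mult, plus; simpl. field. lra.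
Qed.

Lemma Kval_C m x : x <> 0 ->
  (2 * INR m + 1) / (2 * (4 * x) ^ m) * Kval m = / (x ^ m * Binomial.C (2 * m) m).
Proof.
  intros hx. unfold Kval, Binomial.C.
  replace (2 * m - m)%nat with m by lia.
  replace (2 * m + 1)%nat with (S (2 * m)) by lia.
  rewrite fact_simpl, mult_INR, S_INR, mult_INR, Rpow_mult_distr.
  assert (H1 := INR_fact_neq_0 m). assert (H2 := INR_fact_neq_0 (2*m)).
  assert (0 <= INR m) by apply pos_INR. simpl (INR 2).
  assert (x ^ m <> 0) by (apply pow_nonzero; auto).
  assert (4 ^ m <> 0) by (apply pow_nonzero; lra).
  field. repeat split; auto. lra.
Qed.

Definition zf (x s : R) : R := ((1 - s ^ 2) / (4 * x)) ^ 2.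

Lemma term_int x k : x <> 0 ->
  is_RInt (fun s => / 2 * ((4 * INR k + 1) * zf x s ^ k)) (-1) 1
    (/ (x ^ (2 * k) * Binomial.C (4 * k) (2 * k))).
Proof.
  intros hx.
  replace (4 * k)%nat with (2 * (2 * k))%nat by lia.
  rewrite <- Kval_C by auto.
  eapply is_RInt_ext; [| apply (is_RInt_scal _ _ _ ((2 * INR (2 * k) + 1) / (2 * (4 * x) ^ (2 * k))) _ (Kint (2 * k)))].
  intros s _. change (scal ?a ?b) with (Rmult a b).
  unfold zf. rewrite <- pow_mult. unfold Rdiv. rewrite (Rpow_mult_distr (1 - s^2)), pow_inv, mult_INR. simpl (INR 2).
  assert ((4 * x) ^ (2 * k) <> 0) by (apply pow_nonzero; lra).
  match goal with |- ?a = ?b => change (@eq R a b) end. field. auto.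
Qed.

Definition aterm (x : R) (k : nat) : R := / (x ^ (2 * k) * Binomial.C (4 * k) (2 * k)).

Lemma psum_int x N : x <> 0 ->
  is_RInt (fun s => / 2 * sum_n (fun k => (4 * INR k + 1) * zf x s ^ k) N) (-1) 1
    (sum_n (aterm x) N).
Proof.
  intros hx. induction N as [|N IH].
  - rewrite sum_O. eapply is_RInt_ext; [| apply term_int; auto].
    intros s _. rewrite sum_O. reflexivity.
  - rewrite sum_Sn. eapply is_RInt_ext; [| apply (is_RInt_plus _ _ _ _ _ _ IH (term_int x (S N) hx))].
    intros s _. rewrite sum_Sn. change (plus ?a ?b) with (Rplus a b).
    match goal with |- ?a = ?b => change (@eq R a b) end. ring.
Qed.

Lemma psum_closed z N : z <> 1 ->
  sum_n (fun k => (4 * INR k + 1) * z ^ k) N =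
  ((1 + 3 * z) - z ^ (S N) * ((4 * INR N + 5) - (4 * INR N + 1) * z)) / (1 - z) ^ 2.
Proof.
  intros hz. assert (1 - z <> 0) by lra.
  induction N as [|N IH].
  - rewrite sum_O. simpl. field. auto.
  - rewrite sum_Sn, IH. change (plus ?a ?b) with (Rplus a b).
    rewrite S_INR. cbn [pow]. set (w := z ^ N). match goal with |- ?a = ?b => change (@eq R a b) end. field. auto.
Qed.
Definition Gf x ra b s := 16*x^2*(s/(s^2+ra^2)/(2*ra^2) + atan(s/ra)/(2*ra^3)) + 16*x^2*(s/(b^2-s^2)/(2*b^2) + (ln(b+s)-ln(b-s))/(4*b^3)) - 2*x*atan(s/ra)/ra - x*(ln(b+s)-ln(b-s))/b.
Definition hf x ra b s := 16*x^2/(s^2+ra^2)^2 + 16*x^2/(b^2-s^2)^2 - 2*x/(s^2+ra^2) - 2*x/(b^2-s^2).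
Lemma Gf_der x ra b s : 0 < ra -> Rabs s < b -> is_derive (Gf x ra b) s (hf x ra b s).
Proof.
  intros hra hs. unfold Gf. apply Rabs_def2 in hs. destruct hs as [h1 h2].
  auto_derive.
  - repeat split; nra.
  - unfold hf. match goal with |- ?a = ?b => change (@eq R a b) end.
    field. repeat split; nra.
Qed.

Lemma Gf_int x ra b : 0 < ra -> 1 < b ->
  is_RInt (hf x ra b) (-1) 1 (Gf x ra b 1 - Gf x ra b (-1)).
Proof.
  intros hra hb.
  apply (is_RInt_derive (Gf x ra b) (hf x ra b)).
  - intros s Hs. rewrite Rmin_left, Rmax_right in Hs by lra.
    apply Gf_der; auto. apply Rabs_def1; lra.
  - intros s Hs. rewrite Rmin_left, Rmax_right in Hs by lra.
    apply (@ex_derive_continuous R_AbsRing R_NormedModule).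
    assert (s*s <= 1) by nra. assert (1 < b*b) by nra. assert (0 < ra*ra) by nra.
    unfold hf. auto_derive. repeat split; nra.
Qed.

Lemma Gf_eval x : / 4 < x ->
  Gf x (sqrt (4 * x - 1)) (sqrt (4 * x + 1)) 1 - Gf x (sqrt (4 * x - 1)) (sqrt (4 * x + 1)) (-1)
  = 2 * (16 * x ^ 2 / (16 * x ^ 2 - 1)
     + 2 * x * (arccot (sqrt (4 * x - 1)) / ((4 * x - 1) * sqrt (4 * x - 1))
                - arccoth (sqrt (4 * x + 1)) / ((4 * x + 1) * sqrt (4 * x + 1)))).
Proof.
  intros hx.
  assert (Ha : 0 < 4 * x - 1) by lra. assert (HB : 0 < 4 * x + 1) by lra.
  assert (Hra : 0 < sqrt (4 * x - 1)) by (apply sqrt_lt_R0; lra).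
  assert (Hb1 : 1 < sqrt (4 * x + 1)).
  { rewrite <- sqrt_1 at 1. apply sqrt_lt_1; lra. }
  assert (E1 := sqrt_sqrt (4 * x - 1) (Rlt_le _ _ Ha)).
  assert (E2 := sqrt_sqrt (4 * x + 1) (Rlt_le _ _ HB)).
  unfold Gf, arccot, arccoth.
  set (ra := sqrt (4 * x - 1)) in *. set (b := sqrt (4 * x + 1)) in *.
  replace ((-1) / ra) with (- (/ ra)) by (field; lra).
  replace (1 / ra) with (/ ra) by (field; lra).
  rewrite atan_opp.
  replace (b + -1) with (b - 1) by ring. replace (b - -1) with (b + 1) by ring.
  rewrite ln_div by lra.
  set (A := atan (/ ra)). set (L := ln (b + 1) - ln (b - 1)).
  assert (P2 : ra ^ 2 = 4 * x - 1) by (simpl; lra).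
  assert (P3 : ra ^ 3 = (4 * x - 1) * ra) by (rewrite <- E1; ring).
  assert (Q2 : b ^ 2 = 4 * x + 1) by (simpl; lra).
  assert (Q3 : b ^ 3 = (4 * x + 1) * b) by (rewrite <- E2; ring).
  replace (ln (b + 1) - ln (b - 1)) with L by reflexivity.
  replace (ln (b - 1) - ln (b + 1)) with (- L) by (unfold L; ring).
  rewrite P2, P3, Q2, Q3.
  field. assert (0 < x) by lra. repeat split; try lra. nra.
Qed.
Lemma lim_inv : is_lim_seq (fun n => / (4 * INR n + 5)) 0.
Proof.
  assert (H : is_lim_seq (fun n => 4 * INR n + 5) p_infty).
  { apply is_lim_seq_le_p_loc with INR; [| apply is_lim_seq_INR].
    exists 0%nat. intros n _. assert (0 <= INR n) by apply pos_INR. lra. }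
  apply (is_lim_seq_inv _ _ H). discriminate.
Qed.

Lemma lim_err q : 0 < q < 1 -> is_lim_seq (fun N => (4 * INR N + 5) * q ^ (S N)) 0.
Proof.
  intros hq.
  set (c := fun N => (4 * INR N + 5) * q ^ (S N)).
  assert (Hc : forall n, c n <> 0).
  { intros n. unfold c. assert (0 <= INR n) by apply pos_INR.
    apply Rmult_integral_contrapositive; split; [lra | apply pow_nonzero; lra]. }
  assert (Hr : is_lim_seq (fun n => Rabs (c (S n) / c n)) q).
  { apply is_lim_seq_ext with (fun n => q * (1 + 4 * / (4 * INR n + 5))).
    - intros n. unfold c. rewrite S_INR. assert (0 <= INR n) by apply pos_INR.
      cbn [pow]. set (w := q ^ n). assert (0 < w) by (apply pow_lt; lra).
      rewrite Rabs_pos_eq.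
      + field. split; [lra|]. split; lra.
      + apply Rle_trans with 0; [lra|]. apply Rlt_le.
        unfold Rdiv. apply Rmult_lt_0_compat. 
        * repeat apply Rmult_lt_0_compat; nra.
        * apply Rinv_0_lt_compat. repeat apply Rmult_lt_0_compat; nra.
    - assert (E : is_lim_seq (fun n => q * (1 + 4 * / (4 * INR n + 5))) (q * (1 + 4 * 0))).
      { apply is_lim_seq_mult'; [apply is_lim_seq_const|].
        apply is_lim_seq_plus'; [apply is_lim_seq_const|].
        apply is_lim_seq_mult'; [apply is_lim_seq_const| apply lim_inv]. }
      replace (q * (1 + 4 * 0)) with q in E by ring. exact E. }
  assert (Hs := ex_series_DAlembert c q (proj2 hq) Hc Hr).
  apply is_lim_seq_abs_0. apply ex_series_lim_0. exact Hs.
Qed.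

Theorem lemma4p1 (x : R) (hx : / 4 < x) :
  is_series (fun k : nat => / (x ^ (2 * k) * Binomial.C (4 * k) (2 * k)))
    (16 * x ^ 2 / (16 * x ^ 2 - 1)
     + 2 * x * (arccot (sqrt (4 * x - 1)) / ((4 * x - 1) * sqrt (4 * x - 1))
                - arccoth (sqrt (4 * x + 1)) / ((4 * x + 1) * sqrt (4 * x + 1)))).
Proof.
  set (V := 16 * x ^ 2 / (16 * x ^ 2 - 1)
     + 2 * x * (arccot (sqrt (4 * x - 1)) / ((4 * x - 1) * sqrt (4 * x - 1))
                - arccoth (sqrt (4 * x + 1)) / ((4 * x + 1) * sqrt (4 * x + 1)))).
  assert (Hx0 : 0 < x) by lra.
  assert (Ha : 0 < 4 * x - 1) by lra. assert (HB : 0 < 4 * x + 1) by lra.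
  assert (Hra : 0 < sqrt (4 * x - 1)) by (apply sqrt_lt_R0; lra).
  assert (Hb1 : 1 < sqrt (4 * x + 1)).
  { rewrite <- sqrt_1 at 1. apply sqrt_lt_1; lra. }
  assert (E1 := sqrt_sqrt (4 * x - 1) (Rlt_le _ _ Ha)).
  assert (E2 := sqrt_sqrt (4 * x + 1) (Rlt_le _ _ HB)).
  assert (IG := Gf_int x _ _ Hra Hb1).
  rewrite Gf_eval in IG by lra. fold V in IG.
  set (ra := sqrt (4 * x - 1)) in *. set (b := sqrt (4 * x + 1)) in *.
  set (q := (/ (4 * x)) ^ 2).
  assert (Hq0 : 0 < / (4 * x)) by (apply Rinv_0_lt_compat; lra).
  assert (Hq1 : / (4 * x) < 1).
  { rewrite <- Rinv_1. apply Rinv_lt_contravar; lra. }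
  assert (hq : 0 < q < 1) by (unfold q; simpl; split; nra).
  assert (Hz : forall s, -1 <= s <= 1 -> 0 <= zf x s <= q).
  { intros s Hs. unfold zf, q. assert (0 <= 1 - s ^ 2 <= 1) by (simpl; nra).
    unfold Rdiv. split.
    - apply pow2_ge_0.
    - apply pow_incr. split.
      + apply Rmult_le_pos; lra.
      + nra. }
  assert (Hh : forall s, -1 <= s <= 1 ->
     hf x ra b s = (1 + 3 * zf x s) / (1 - zf x s) ^ 2).
  { intros s Hs. assert (0 <= 1 - s ^ 2 <= 1) by (simpl; nra).
    unfold hf, zf.
    assert (P2 : ra ^ 2 = 4 * x - 1) by (simpl; lra).
    assert (Q2 : b ^ 2 = 4 * x + 1) by (simpl; lra).
    rewrite P2, Q2. simpl. field. repeat split; nra. }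
  set (e := fun N => (4 * INR N + 5) * q ^ (S N) * / (1 - q) ^ 2).
  assert (He : is_lim_seq e 0).
  { assert (E := is_lim_seq_mult' _ _ _ _ (lim_err q hq) (is_lim_seq_const (/ (1 - q) ^ 2))).
    rewrite Rmult_0_l in E. exact E. }
  assert (Hbnd : forall N, Rabs (V - sum_n (aterm x) N) <= e N).
  { intros N.
    assert (IN := psum_int x N ltac:(lra)).
    assert (D := is_RInt_minus _ _ _ _ _ _ (is_RInt_scal _ _ _ (/ 2) _ IG) IN).
    assert (K : norm (minus (scal (/ 2) (2 * V)) (sum_n (aterm x) N)) <= (1 - -1) * (/ 2 * e N)).
    2: { change (norm (minus (scal (/ 2) (2 * V)) (sum_n (aterm x) N))) with (Rabs (/ 2 * (2 * V) - sum_n (aterm x) N)) in K.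
         replace (/ 2 * (2 * V)) with V in K by field. lra. }
    refine (norm_RInt_le_const _ (-1) 1 _ _ _ _ D); [lra|].
    { intros s Hs. change norm with Rabs.
      change (minus (scal (/ 2) (hf x ra b s)) (/ 2 * sum_n (fun k => (4 * INR k + 1) * zf x s ^ k) N))
        with (/ 2 * hf x ra b s - / 2 * sum_n (fun k => (4 * INR k + 1) * zf x s ^ k) N).
      destruct (Hz s Hs) as [z0 z1].
      rewrite Hh by auto. rewrite psum_closed by lra.
      set (z := zf x s) in *.
      assert (0 <= INR N) by apply pos_INR.
      assert (Hpz : 0 <= z ^ S N <= q ^ S N) by (split; [apply pow_le; lra | apply pow_incr; lra]).
      assert (Hden : (1 - q) ^ 2 <= (1 - z) ^ 2) by (simpl; nra).
      assert (Hd0 : 0 < (1 - q) ^ 2) by (simpl; nra).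
      replace (/ 2 * ((1 + 3 * z) / (1 - z) ^ 2) -
               / 2 * ((1 + 3 * z - z ^ S N * (4 * INR N + 5 - (4 * INR N + 1) * z)) / (1 - z) ^ 2))
        with (/ 2 * (z ^ S N * (4 * INR N + 5 - (4 * INR N + 1) * z) * / (1 - z) ^ 2))
        by (field; lra).
      assert (Hi : / (1 - z) ^ 2 <= / (1 - q) ^ 2) by (apply Rinv_le_contravar; lra).
      assert (Hi0 : 0 < / (1 - z) ^ 2) by (apply Rinv_0_lt_compat; lra).
      assert (Hm : 0 <= 4 * INR N + 5 - (4 * INR N + 1) * z <= 4 * INR N + 5) by nra.
      rewrite Rabs_pos_eq.
      + unfold e. apply Rmult_le_compat_l; [lra|].
        rewrite (Rmult_comm (4 * INR N + 5)).
        apply Rmult_le_compat.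
        * apply Rmult_le_pos; lra.
        * lra.
        * apply Rmult_le_compat; lra.
        * lra.
      + apply Rmult_le_pos; [lra|]. apply Rmult_le_pos; [|lra]. apply Rmult_le_pos; lra. } }
  unfold is_series. change (is_lim_seq (sum_n (aterm x)) V).
  apply is_lim_seq_le_le with (fun N => V - e N) (fun N => V + e N).
  - intros N. specialize (Hbnd N). apply Rabs_le_between in Hbnd. lra.
  - assert (E := is_lim_seq_minus' _ _ _ _ (is_lim_seq_const V) He).
    rewrite Rminus_0_r in E. exact E.
  - assert (E := is_lim_seq_plus' _ _ _ _ (is_lim_seq_const V) He).
    rewrite Rplus_0_r in E. exact E.
Qed.
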